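(* For every $n \geqslant 2$ there exist a finite alphabet $\Sigma_n$, a partial function $\delta_n: \{1,\ldots,n\} \times \Sigma_n \to \{1,\ldots,n\} \times \{-1,+1\}$, and a string $w_n \in \Sigma_n^*$ of length $3 \cdot 2^{n-2} - 1$ such that: (1) for every position $i \in \{1, \ldots, |w_n|\}$, the computation of $\delta_n$ on $w_n$ started at position $i$ in state $n$ leaves $w_n$, and the first time it leaves $w_n$ it does so by a move from position $|w_n|$ to the right into state $1$; (2) for every nonempty string $u \in \Sigma_n^*$, if there exists a position $i \in \{1,\ldots,|u|\}$ such that the computation of $\delta_n$ on $u$ started at position $i$ in state $n$ leaves $u$, and the first time it leaves $u$ it does so by a move from position $|u|$ to the right into state $1$, then $|u| \geqslant |w_n|$.
   Context: For a partial transition function $\delta: Q \times \Sigma \to Q \times \{-1,+1\}$ (no end-markers, no initial or accepting states) and a string $u = c_1 \cdots c_m \in \Sigma^*$, the computation started at position $i \in \{1,\ldots,m\}$ in state $q$ is the sequence of configurations (state, position) defined as follows: in configuration $(p, j)$ with $1 \leqslant j \leqslant m$, if $\delta(p, c_j) = (r, d)$ the next configuration is $(r, j+d)$; if $\delta(p, c_j)$ is undefined the computation halts without leaving $u$. The computation leaves $u$ when it reaches a position $j+d \notin \{1,\ldots,m\}$, i.e. moves left from position $1$ or right from position $m$; it may also run forever inside $u$. *)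

(* Defs.v *)
From mathcomp Require Import all_boot.
Set Implicit Arguments. Unset Strict Implicit. Unset Printing Implicit Defensive.

Inductive dir := Left | Right.

Definition trans (Q S : Type) := Q -> S -> option (Q * dir).

(* A configuration: (state, position); positions of u = c_1...c_m are 1..m,
   positions 0 and m+1 mean the head has left u. *)
Definition config (Q : Type) := (Q * nat)%type.

Definition step (Q S : Type) (delta : trans Q S) (u : seq S) (c : config Q)
  : option (config Q) :=
  let: (p, j) := c in
  if (1 <= j <= size u) then
    match u with
    | [::] => None
    | c0 :: _ =>
      match delta p (nth c0 u j.-1) with
      | Some (r, Left) => Some (r, j.-1)
      | Some (r, Right) => Some (r, j.+1)
      | None => None
      end
    end
  else None.

Fixpoint run (Q S : Type) (delta : trans Q S) (u : seq S) (k : nat)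
  (c : config Q) : option (config Q) :=
  match k with
  | 0 => Some c
  | k'.+1 => match step delta u c with
             | Some c' => run delta u k' c'
             | None => None
             end
  end.

(* The computation on u started at position i in state q leaves u, and the
   first time it leaves u it does so by moving right from position |u| into
   state r.  (Since the computation stops as soon as it leaves u, reaching
   position |u|+1 is exactly that first exit.) *)
Definition leaves_right_into (Q S : Type) (delta : trans Q S) (u : seq S)
  (i : nat) (q r : Q) : Prop :=
  exists k, run delta u k (q, i) = Some (r, (size u).+1).

(* Main.v *)
Require Import Defs.
From mathcomp Require Import all_boot zify.
Set Implicit Arguments. Unset Strict Implicit. Unset Printing Implicit Defensive.

Definition mv (d : dir) (i : nat) := match d with Left => i.-1 | Right => i.+1 end.

Fixpoint runw (Q S : Type) (delta : trans Q S) (u : seq S) (a b k : nat)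
  (c : config Q) : option (config Q) :=
  match k with
  | 0 => Some c
  | k'.+1 => if (a <= c.2 <= b) then
              match step delta u c with
              | Some c' => runw delta u a b k' c'
              | None => None end
            else None
  end.

Lemma runwS (Q S : Type) (delta : trans Q S) u a b k c :
  runw delta u a b k.+1 c = if a <= c.2 <= b then
     match step delta u c with Some c' => runw delta u a b k c' | None => None end
  else None.
Proof. by []. Qed.

Lemma stepE (Q S : Type) (delta : trans Q S) (u : seq S) (x0 : S) q i :
  step delta u (q, i) =
  if 1 <= i <= size u then
    match delta q (nth x0 u i.-1) with
    | Some (r, d) => Some (r, mv d i) | None => None end
  else None.
Proof.
rewrite /step; case: ifP => // /andP[h1 h2].
case: u h1 h2 => [|c0 u] h1 h2; first by move: (leq_trans h1 h2).
rewrite (set_nth_default x0 c0); last by move: h1 h2; case: i.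
by case: (delta q _) => [[r []]|].
Qed.

Lemma runw_full (Q S : Type) (delta : trans Q S) u k c :
  runw delta u 1 (size u) k c = run delta u k c.
Proof.
elim: k c => [|k IH] [q i] //.
have -> : run delta u k.+1 (q,i) = match step delta u (q,i) with Some c' => run delta u k c' | None => None end by [].
have -> : runw delta u 1 (size u) k.+1 (q,i) = if (1 <= i <= size u) then match step delta u (q,i) with Some c' => runw delta u 1 (size u) k c' | None => None end else None by [].
case: ifP => h; first by case: (step delta u (q,i)).
by rewrite /step h.
Qed.

Lemma runw_add (Q S : Type) (delta : trans Q S) u a b x y c :
  runw delta u a b (x + y) c =
  match runw delta u a b x c with Some c' => runw delta u a b y c' | None => None end.
Proof.
elim: x c => [|x IH] c //.
rewrite addSn !runwS; case: ifP => // _; case: (step delta u c) => //.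
Qed.

Lemma runw_mono (Q S : Type) (delta : trans Q S) u a b a' b' k c c' :
  a <= a' -> b' <= b -> runw delta u a' b' k c = Some c' -> runw delta u a b k c = Some c'.
Proof.
move=> ha hb; elim: k c => [|k IH] c //.
rewrite !runwS; case: ifP => // /andP[h1 h2].
rewrite (leq_trans ha h1) (leq_trans h2 hb) /=.
by case: (step delta u c) => // c2; apply: IH.
Qed.

Lemma runw_term (Q S : Type) (delta : trans Q S) u a b k q c' :
  runw delta u a b k (q, b.+1) = Some c' -> c' = (q, b.+1).
Proof. by case: k => [[<-]|k] //; rewrite runwS /= ltnn andbF. Qed.

Lemma runwS_inv (Q S : Type) (delta : trans Q S) u (x0 : S) a b k q i c' :
  runw delta u a b k.+1 (q, i) = Some c' ->
  [/\ a <= i <= b, 1 <= i <= size u &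
   exists r d, delta q (nth x0 u i.-1) = Some (r, d) /\ runw delta u a b k (r, mv d i) = Some c'].
Proof.
rewrite runwS (stepE _ _ x0); case: ifP => // hab; case: ifP => // hu.
case e: (delta q _) => [[r d]|] // h.
by split => //; exists r, d.
Qed.

Lemma runw_cons (Q S : Type) (delta : trans Q S) u (x0 : S) a b k q i r d :
  a <= i <= b -> 1 <= i <= size u -> delta q (nth x0 u i.-1) = Some (r, d) ->
  runw delta u a b k.+1 (q, i) = runw delta u a b k (r, mv d i).
Proof. by move=> h1 h2 h3; rewrite runwS (stepE _ _ x0) /= h1 h2 h3. Qed.

Lemma step_mv (Q S : Type) (delta : trans Q S) u q j q1 j1 :
  step delta u (q, j) = Some (q1, j1) -> j1 = j.-1 \/ j1 = j.+1.
Proof.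
rewrite /step; case: ifP => // _; case: u => // c0 u'.
by case: (delta _ _) => [[? []]|] // [_ <-]; [left|right].
Qed.

Lemma split_right (Q S : Type) (delta : trans Q S) u a b p k c r e :
  c.2 < p -> p <= e -> runw delta u a b k c = Some (r, e) ->
  exists t q, t <= k /\ runw delta u a p.-1 t c = Some (q, p) /\
              runw delta u a b (k - t) (q, p) = Some (r, e).
Proof.
elim: k c => [|k IH] [q0 j] hj hpe; rewrite /= in hj.
  by case=> _ he; rewrite he ltnNge hpe in hj.
rewrite runwS; case: ifP => // /andP[h1 h2]; rewrite /= in h1 h2.
case es: (step delta u (q0, j)) => [[q1 j1]|] // H.
have hmv : j1 = j.-1 \/ j1 = j.+1.
  exact: step_mv es.
case: (eqVneq j1 p) => [ej|nej].
  exists 1, q1; split => //; split.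
    rewrite runwS (_ : (a <= (q0, j).2 <= p.-1) = true); last by apply/andP; split => /=; lia.
    by rewrite es ej.
  by rewrite subn1 /= -ej.
have hj1 : j1 < p by lia.
have [t [q [ht [H1 H2]]]] := IH (q1, j1) hj1 hpe H.
exists t.+1, q; split => //; split; last by rewrite subSS.
rewrite runwS (_ : (a <= (q0, j).2 <= p.-1) = true); last by apply/andP; split => /=; lia.
by rewrite es.
Qed.

Lemma split_left (Q S : Type) (delta : trans Q S) u a b p k c fin :
  p < c.2 -> runw delta u a b k c = Some fin ->
  runw delta u p.+1 b k c = Some fin \/
  exists t q, 0 < t <= k /\ runw delta u a b (k - t) (q, p) = Some fin.
Proof.
elim: k c => [|k IH] [q0 j] hj; rewrite /= in hj; first by left.
rewrite runwS; case: ifP => // /andP[h1 h2]; rewrite /= in h1 h2.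
case es: (step delta u (q0, j)) => [[q1 j1]|] // H.
have hmv : j1 = j.-1 \/ j1 = j.+1.
  exact: step_mv es.
case: (eqVneq j1 p) => [ej|nej].
  right; exists 1, q1; split => //.
  by rewrite subn1 /= -ej.
have hj1 : p < j1 by lia.
case: (IH (q1, j1) hj1 H) => [H'|[t [q [ht H']]]].
  by left; rewrite runwS (_ : (p.+1 <= (q0, j).2 <= b) = true) ?es //; apply/andP; split => /=; lia.
right; exists t.+1, q; split; first by lia.
by rewrite subSS.
Qed.

Definition Sym N := ('I_N.+1 * {ffun 'I_N.+1 -> bool})%type.
Definition x0 N : Sym N := (ord0, [ffun => true]).
Definition pr N (x : 'I_N.+1) : 'I_N.+1 := inord (nat_of_ord x).-1.
Definition dlt N : trans 'I_N.+1 (Sym N) := fun s x =>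
  if nat_of_ord s == 0 then Some (pr x.1, Right)
  else if nat_of_ord x.1 == nat_of_ord s then Some (pr s, Left)
  else if nat_of_ord x.1 < nat_of_ord s then Some (s, if x.2 s then Right else Left)
  else None.

Lemma prE N (x : 'I_N.+1) : nat_of_ord (pr x) = (nat_of_ord x).-1.
Proof. by rewrite /pr /= inordK // (leq_ltn_trans (leq_pred _) (ltn_ord x)). Qed.

Lemma dlt_0 N (s : 'I_N.+1) x : nat_of_ord s = 0 -> dlt s x = Some (pr x.1, Right).
Proof. by rewrite /dlt => ->. Qed.
Lemma dlt_lt N (s : 'I_N.+1) x : 0 < s -> nat_of_ord x.1 < nat_of_ord s ->
  dlt s x = Some (s, if x.2 s then Right else Left).
Proof. rewrite /dlt => h1 h2; have -> : (nat_of_ord s == 0) = false by lia. have -> : (nat_of_ord x.1 == s) = false by lia. by rewrite h2. Qed.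
Lemma dlt_gt N (s : 'I_N.+1) x : 0 < s -> nat_of_ord s < nat_of_ord x.1 -> dlt s x = None.
Proof. rewrite /dlt => h1 h2; have -> : (nat_of_ord s == 0) = false by lia.
have -> : (nat_of_ord x.1 == s) = false by lia.
by have -> : (nat_of_ord x.1 < s) = false by lia. Qed.
Lemma dlt_eq N (s : 'I_N.+1) x : 0 < s -> nat_of_ord x.1 = nat_of_ord s -> dlt s x = Some (pr s, Left).
Proof. rewrite /dlt => h1 h2; have -> : (nat_of_ord s == 0) = false by lia.
by have -> : (nat_of_ord x.1 == s) = true by lia. Qed.

Definition mm s := 3 * 2 ^ s.-1 - 1.
Lemma mmS s : 0 < s -> mm s.+1 = (mm s).*2.+1.
Proof.
case: s => // s _; rewrite /mm /= expnS.
have := expn_gt0 2 s; lia.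
Qed.
Lemma mm_mono s t : s <= t -> mm s <= mm t.
Proof.
move=> h; rewrite /mm; apply: leq_sub2r; rewrite leq_mul2l /=.
by apply: leq_pexp2l => //; lia.
Qed.
Lemma mm1 : mm 1 = 2. Proof. by []. Qed.

Lemma LB N (u : seq (Sym N)) k : forall (s r : 'I_N.+1) a b i, 0 < s -> nat_of_ord r = 0 ->
  runw (@dlt N) u a b k (s, i) = Some (r, b.+1) -> mm s + a <= b.+1.
Proof.
elim/ltn_ind: k => k IH s r a b i s0 r0 H.
case: k IH H => [|k] IH H.
  by case: H => es _; move: s0; rewrite es r0.
have [/andP[ai ib] /andP[i1 iu] [r1 [d [D H1]]]] := runwS_inv (x0 N) H.
set x := nth _ u i.-1 in D.
case: (ltngtP (nat_of_ord x.1) (nat_of_ord s)) => hk.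
- rewrite dlt_lt // in D; case: D => e1 e2; subst r1.
  exact: (IH k (ltnSn k) s r a b _ s0 r0 H1).
- by rewrite dlt_gt in D.
- rewrite dlt_eq // in D; case: D => e1 e2; subst r1 d.
  have ps : nat_of_ord (pr s) = (nat_of_ord s).-1 by rewrite prE.
  case: (eqVneq (nat_of_ord s) 1) => s1.
    case: k IH H1 {H} => [|k] IH H1.
      by case: H1 => _ e; rewrite /= in e; lia.
    have [/andP[ai' _] _ _] := runwS_inv (x0 N) H1.
    by rewrite s1 mm1 /=; rewrite /= in ai'; lia.
  have ps0 : 0 < pr s by rewrite ps; lia.
  have hxs : x.1 = s by apply: val_inj.
  have inner : forall k2, k2 < k.+1 ->
      runw (@dlt N) u a b k2 (pr s, i.+1) = Some (r, b.+1) ->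
      mm (pr s) + i <= b \/ mm s + a <= b.+1.
    elim/ltn_ind => k2 IH2 hk2 H2.
    have hc : i < (pr s, i.+1).2 by [].
    case: (split_left hc H2) => [HA | [t [q [ht Hq]]]].
      by left; have := IH k2 hk2 (pr s) r i.+1 b i.+1 ps0 r0 HA; lia.
    case e: (k2 - t) Hq => [|k3] Hq.
      by case: Hq => _ ei; lia.
    have [_ _ [r3 [d3 [D3 H3]]]] := runwS_inv (x0 N) Hq.
    rewrite -/x in D3.
    case: (posnP (nat_of_ord q)) => q0.
      rewrite dlt_0 // in D3; case: D3 => e3 e4; subst r3 d3.
      rewrite hxs /= in H3.
      apply: (IH2 k3) H3; lia.
    case: (ltnP (nat_of_ord q) (nat_of_ord s)) => qs.
      by rewrite dlt_gt // hk in D3.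
    right; have := IH (k2 - t) _ q r a b i q0 r0; rewrite e => /(_ _ Hq).
    have := mm_mono qs; lia.
  have hc : (pr s, i.-1).2 < i by rewrite /=; lia.
  have hib : i <= b.+1 by lia.
  have [t [q [ht [Hl Hr]]]] := split_right hc hib H1.
  case e: (k - t) Hr => [|k2] Hr.
    by case: Hr => _ ei; lia.
  have [_ _ [r3 [d3 [D3 H3]]]] := runwS_inv (x0 N) Hr.
  rewrite -/x in D3.
  case: (posnP (nat_of_ord q)) => q0.
    rewrite dlt_0 // in D3; case: D3 => e3 e4; subst r3 d3.
    rewrite hxs /= in H3.
    have hL := IH t (leq_ltn_trans ht (ltnSn k)) (pr s) q a i.-1 i.-1 ps0 q0.
    rewrite prednK // in hL; have {}hL := hL Hl.
    have hm : mm s = (mm (pr s)).*2.+1.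
      by rewrite -mmS // ps prednK //; lia.
    have := inner k2 ltac:(lia) H3; rewrite hm; lia.
  case: (ltnP (nat_of_ord q) (nat_of_ord s)) => qs.
    by rewrite dlt_gt // hk in D3.
  have := IH k2.+1 _ q r a b i q0 r0 Hr.
  have := mm_mono qs; move=> h1 h2; have := h2 ltac:(lia); lia.
Qed.

Definition settag N (s : nat) (b : bool) (x : Sym N) : Sym N :=
  (x.1, [ffun q : 'I_N.+1 => if nat_of_ord q == s then b else x.2 q]).

Fixpoint blk N (s : nat) : seq (Sym N) :=
  match s with
  | 0 => [::]
  | s'.+1 => if s' is 0 then [:: (inord 0, [ffun => true]); (inord 1, [ffun => true])]
             else map (settag s true) (blk N s') ++ (inord s, [ffun => true]) :: map (settag s false) (blk N s')
  end.

Lemma blkS N s : 0 < s -> blk N s.+1 =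
  map (settag s.+1 true) (blk N s) ++ (inord s.+1, [ffun => true]) :: map (settag s.+1 false) (blk N s).
Proof. by case: s. Qed.

Lemma size_blk N s : 0 < s -> size (blk N s) = mm s.
Proof.
elim: s => // s IH _; case: (posnP s) => [->|s0] //.
by rewrite blkS // size_cat /= !size_map IH // mmS //; lia.
Qed.

Definition sym N (u : seq (Sym N)) j := nth (x0 N) u j.-1.

Definition agree N (s : nat) (x y : Sym N) :=
  x.1 = y.1 /\ forall q : 'I_N.+1, q <= s -> x.2 q = y.2 q.

Definition good N s (u : seq (Sym N)) a :=
  forall j, j < mm s -> agree s (sym u (a + j)) (nth (x0 N) (blk N s) j).

Lemma blk_kind N s j : 0 < s -> s <= N -> j < mm s -> nat_of_ord (nth (x0 N) (blk N s) j).1 <= s.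
Proof.
elim: s j => // s IH j _ hN hj; case: (posnP s) => [s0|s0].
  subst s; case: j hj => [|[|j]] // _; rewrite /= inordK //; lia.
rewrite blkS // nth_cat size_map size_blk //.
case: ifP => h1.
  rewrite (nth_map (x0 N)) ?size_blk //=; have := IH j s0 ltac:(lia) h1; lia.
case: (j - mm s) => [|j'] /=; first by rewrite inordK //; lia.
case: (ltnP j' (mm s)) => h2.
  rewrite (nth_map (x0 N)) ?size_blk //=; have := IH j' s0 ltac:(lia) h2; lia.
by rewrite nth_default ?size_map ?size_blk.
Qed.

Lemma walkR N (u : seq (Sym N)) a b q d : forall i,
  (forall j, i <= j < i + d -> [/\ a <= j <= b, 1 <= j <= size u &
        @dlt N q (sym u j) = Some (q, Right)]) ->
  runw (@dlt N) u a b d (q, i) = Some (q, i + d).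
Proof.
elim: d => [|d IH] i h; first by rewrite addn0.
have [h1 h2 h3] := h i ltac:(lia).
rewrite (runw_cons (x0:=x0 N) _ h1 h2 h3) /= IH ?addSnnS // => j hj.
apply: h; lia.
Qed.

Lemma walkL N (u : seq (Sym N)) a b q d : forall i,
  (forall j, i < j <= i + d -> [/\ a <= j <= b, 1 <= j <= size u &
        @dlt N q (sym u j) = Some (q, Left)]) ->
  runw (@dlt N) u a b d (q, i + d) = Some (q, i).
Proof.
elim: d => [|d IH] i h; first by rewrite addn0.
have [h1 h2 h3] := h (i + d.+1) ltac:(lia).
rewrite (runw_cons (x0:=x0 N) _ h1 h2 h3) /= addnS /= IH // => j hj.
apply: h; lia.
Qed.

Lemma nth_blkL N s j : 0 < s -> j < mm s ->
  nth (x0 N) (blk N s.+1) j = settag s.+1 true (nth (x0 N) (blk N s) j).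
Proof.
move=> s0 hj; rewrite blkS // nth_cat size_map size_blk // hj.
by rewrite (nth_map (x0 N)) ?size_blk.
Qed.

Lemma nth_blkC N s : 0 < s -> nth (x0 N) (blk N s.+1) (mm s) = (inord s.+1, [ffun => true]).
Proof. by move=> s0; rewrite blkS // nth_cat size_map size_blk // ltnn subnn. Qed.

Lemma nth_blkR N s j : 0 < s -> j < mm s ->
  nth (x0 N) (blk N s.+1) ((mm s).+1 + j) = settag s.+1 false (nth (x0 N) (blk N s) j).
Proof.
move=> s0 hj; rewrite blkS // nth_cat size_map size_blk // ifN; last by lia.
rewrite (_ : (mm s).+1 + j - mm s = j.+1) /=; last by lia.
by rewrite (nth_map (x0 N)) ?size_blk.
Qed.

Lemma agree_settag N s b (x y : Sym N) : agree s.+1 x (settag s.+1 b y) ->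
  agree s x y /\ forall q : 'I_N.+1, nat_of_ord q = s.+1 -> x.2 q = b.
Proof.
case=> h1 h2; split.
  split => // q hq; rewrite h2 /= ?ffunE ?ifN //; lia.
by move=> q hq; rewrite h2 /= ?ffunE ?hq ?eqxx //; lia.
Qed.

Lemma UB N s : 0 < s -> s <= N -> forall (u : seq (Sym N)) a, 0 < a ->
  a + mm s <= (size u).+1 -> good s u a ->
  forall (q : 'I_N.+1), nat_of_ord q = s -> forall i, a <= i < a + mm s ->
  exists k (r : 'I_N.+1), nat_of_ord r = 0 /\
    runw (@dlt N) u a (a + mm s).-1 k (q, i) = Some (r, a + mm s).
Proof.
elim: s => // s IH _ hsN u a ha hsz hg q hq i hi.
case: (posnP s) => s0.
  subst s; rewrite mm1 in hsz hi *.
  have [k0 t0] := hg 0 isT; have [k1 _] := hg 1 isT.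
  rewrite addn0 /= in k0 t0; rewrite addn1 /= in k1.
  have vk0 : nat_of_ord (sym u a).1 = 0 by rewrite k0 inordK.
  have vk1 : nat_of_ord (sym u a.+1).1 = 1 by rewrite k1 inordK.
  have q0 : 0 < q by lia.
  have D1 : dlt q (sym u a) = Some (q, Right).
    by rewrite dlt_lt ?vk0 // t0 ?ffunE //; lia.
  have D2 : dlt q (sym u a.+1) = Some (pr q, Left) by rewrite dlt_eq // vk1.
  have D3 : dlt (pr q) (sym u a) = Some (pr (sym u a).1, Right) by rewrite dlt_0 // prE hq.
  have D4 : dlt (pr (sym u a).1) (sym u a.+1) = Some (pr (sym u a.+1).1, Right).
    by rewrite dlt_0 // prE vk0.
  have vr : nat_of_ord (pr (sym u a.+1).1) = 0 by rewrite prE vk1.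
  have hA : a <= a <= (a + 2).-1 by lia.
  have hA1 : a <= a.+1 <= (a + 2).-1 by lia.
  have sA : 1 <= a <= size u by lia.
  have sA1 : 1 <= a.+1 <= size u by lia.
  have E3 : runw (@dlt N) u a (a + 2).-1 3 (q, a.+1) = Some (pr (sym u a.+1).1, a + 2).
    rewrite (runw_cons (x0:=x0 N) _ hA1 sA1 D2) (runw_cons (x0:=x0 N) _ hA sA D3).
    by rewrite (runw_cons (x0:=x0 N) _ hA1 sA1 D4) addn2.
  case/andP: hi => hi1 hi2.
  case: (eqVneq i a) => [->|nia].
    exists 4, (pr (sym u a.+1).1); split => //.
    by rewrite (runw_cons (x0:=x0 N) _ hA sA D1).
  have -> : i = a.+1 by lia.
  by exists 3, (pr (sym u a.+1).1).
set M := mm s.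
have hm : mm s.+1 = M.*2.+1 by rewrite mmS.
rewrite hm in hsz hi *.
set p := a + M.
have hgl : good s u a.
  move=> j hj; have := hg j ltac:(lia); rewrite nth_blkL //.
  by case/agree_settag.
have hgr : good s u p.+1.
  move=> j hj; have := hg ((mm s).+1 + j) ltac:(lia); rewrite nth_blkR //.
  by rewrite (_ : a + ((mm s).+1 + j) = p.+1 + j); [case/agree_settag|rewrite /p /M; lia].
have tL : forall j, a <= j < p -> dlt q (sym u j) = Some (q, Right).
  move=> j hj; have := hg (j - a) ltac:(lia); rewrite nth_blkL //; last by lia.
  case/agree_settag; rewrite subnKC; last by lia.
  case=> hk _ ht.
  have hk' : nat_of_ord (sym u j).1 < q.
    by rewrite hk; have := @blk_kind N s (j - a) s0 ltac:(lia) ltac:(lia); lia.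
  by rewrite dlt_lt ?(ht q hq) //; lia.
have tR : forall j, p < j <= p + M -> dlt q (sym u j) = Some (q, Left).
  move=> j hj; have := hg ((mm s).+1 + (j - p.+1)) ltac:(lia); rewrite nth_blkR //; last by lia.
  case/agree_settag; rewrite (_ : a + ((mm s).+1 + (j - p.+1)) = j); last by rewrite /p; lia.
  case=> hk _ ht.
  have hk' : nat_of_ord (sym u j).1 < q.
    by rewrite hk; have := @blk_kind N s (j - p.+1) s0 ltac:(lia) ltac:(lia); lia.
  by rewrite dlt_lt ?(ht q hq) //; lia.
have kc : nat_of_ord (sym u p).1 = s.+1.
  have := hg M ltac:(lia); rewrite nth_blkC //; case=> -> _; rewrite inordK //; lia.
have q0 : 0 < q by lia.
have from_p : exists k (r : 'I_N.+1), nat_of_ord r = 0 /\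
    runw (@dlt N) u a (a + M.*2.+1).-1 k (q, p) = Some (r, a + M.*2.+1).
  have Dp : dlt q (sym u p) = Some (pr q, Left) by rewrite dlt_eq // kc.
  have hP : a <= p <= (a + M.*2.+1).-1 by rewrite /p; lia.
  have sP : 1 <= p <= size u by rewrite /p; lia.
  have hM : 0 < M by rewrite /M /mm; have := expn_gt0 2 s.-1; lia.
  have [k1 [r1 [vr1 H1]]] := IH s0 ltac:(lia) u a ha ltac:(lia) hgl (pr q) ltac:(rewrite prE; lia)
                         p.-1 ltac:(rewrite /p; lia).
  have Dp2 : dlt r1 (sym u p) = Some (pr (sym u p).1, Right) by rewrite dlt_0.
  have [k2 [r2 [vr2 H2]]] := IH s0 ltac:(lia) u p.+1 ltac:(lia) ltac:(rewrite /p; lia) hgr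
                         (pr (sym u p).1) ltac:(rewrite prE; lia) p.+1 ltac:(lia).
  exists (1 + k1 + 1 + k2), r2; split => //.
  rewrite !runw_add.
  rewrite (_ : runw (@dlt N) u a (a + M.*2.+1).-1 1 (q, p) = Some (pr q, p.-1)); last first.
    by rewrite (runw_cons (x0:=x0 N) _ hP sP Dp).
  rewrite (runw_mono _ _ H1); [|by []|by rewrite /p; lia].
  rewrite /p -/M (_ : a + M = p) // (runw_cons (x0:=x0 N) _ hP sP Dp2) /=.
  rewrite (runw_mono _ _ H2); [|by rewrite /p; lia|by rewrite /p; lia].
  by rewrite /p; congr (Some (_, _)); lia.
case/andP: hi => hi1 hi2.
case: (leqP i p) => hip.
  have [k [r [vr H]]] := from_p.
  exists (p - i + k), r; split => //.
  rewrite runw_add (walkR (q:=q) (a:=a) (b:=(a + M.*2.+1).-1) (d:=p - i) (i:=i)).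
    by rewrite subnKC.
  move=> j hj; split; [lia|lia|apply: tL; lia].
have [k [r [vr H]]] := from_p.
exists (i - p + k), r; split => //.
have W := walkL (u:=u) (q:=q) (a:=a) (b:=(a + M.*2.+1).-1) (d:=i - p) (i:=p).
rewrite subnKC in W; last by lia.
rewrite runw_add W //.
move=> j hj; split; [lia|lia|apply: tR; lia].
Qed.

Theorem mainTheorem9 (n : nat) (hn : 2 <= n) :
  exists (S : finType) (delta : trans 'I_n S) (w : seq S),
    size w = 3 * 2 ^ (n - 2) - 1 /\
    (forall (q1 qn : 'I_n), nat_of_ord q1 = 0 -> nat_of_ord qn = n.-1 ->
      (forall i, 1 <= i <= size w -> leaves_right_into delta w i qn q1) /\
      (forall u : seq S, 0 < size u ->
        (exists i, 1 <= i <= size u /\ leaves_right_into delta u i qn q1) ->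
        size w <= size u)).
Proof.
case: n hn => [//|N] hN.
have N0 : 0 < N by lia.
exists (('I_N.+1 * {ffun 'I_N.+1 -> bool})%type : finType), (@dlt N), (blk N N).
have sz : size (blk N N) = mm N by rewrite size_blk.
split.
  rewrite sz /mm; congr (_ - _); congr (_ * _); congr (_ ^ _); lia.
move=> q1 qn h1 hqn; rewrite /= in hqn; split.
  move=> i hi.
  have hg : good N (blk N N) 1.
    move=> j hj; rewrite /sym add1n /=; split => //.
  have [k [r [vr H]]] := UB N0 (leqnn N) (u:=blk N N) (a:=1) isT ltac:(rewrite sz; lia) hg hqn (i:=i) ltac:(rewrite sz in hi; lia).
  exists k; rewrite -runw_full.
  have -> : q1 = r by apply: val_inj; rewrite /= h1 vr.
  by rewrite sz -H add1n.
move=> u _ [i [hi [k Hk]]].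
rewrite -runw_full in Hk.
have := LB (s:=qn) (r:=q1) (a:=1) (b:=size u) (i:=i) ltac:(lia) h1 Hk.
rewrite sz hqn; lia.
Qed.
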